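(* Let $A\in\mathbb{R}^{n\times n}$, $B\in\mathbb{R}^{n\times m}$ with $(A,B)$ stabilizable, and let $Q\succ 0$, $R\succ 0$ be symmetric weight matrices. Let $\tilde F\in\mathbb{R}^{m\times n}$ be such that $A+B\tilde F$ is Hurwitz and let $\tilde P\succ 0$ be the unique solution of $(A+B\tilde F)^T\tilde P+\tilde P(A+B\tilde F)+Q+\tilde F^TR\tilde F=0$; set $V(x):=x^T\tilde P x$. Consider $\dot x(t)=Ax(t)+Bu(t)$, $x(0)=x_0$, under the sample-and-hold law $u(t)=F_k x(t_k)$ for $t\in[t_k,t_{k+1})$, with triggering times $0=t_0<t_1<\cdots$, inter-execution times $\delta_k=t_{k+1}-t_k$ and gains $F_k\in\mathbb{R}^{m\times n}$. Suppose that for some given $\alpha>1$ the sequences $\{t_k\}$, $\{\delta_k\}$, $\{F_k\}$ satisfy, for every $k\ge 0$ and every $\xi\in[0,\delta_k]$, $$J_k(F_k,\xi;x_k)\le \alpha\big(V(x(t_k))-V(x(t_k+\xi))\big).$$ Then the control law is stabilizing. Moreover, for all nonzero $x_0\in\mathbb{R}^n$, the relative performance loss satisfies $\nu(x_0)\le \alpha-1$.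
   Context: $x_k:=x(t_k)$. For $\xi\ge 0$, $J_k(F_k,\xi;x_k):=\int_{t_k}^{t_k+\xi}\big(x(t)^TQx(t)+u(t)^TRu(t)\big)\,dt$, where on this interval the input is held at $u(t)=F_kx_k$. The total cost is $J(x_0):=\sum_{k=0}^{\infty}J_k(F_k,\delta_k;x_k)$, the benchmark cost is $\tilde J(x_0):=x_0^T\tilde P x_0$, and the relative performance loss is $\nu(x_0):=\big(J(x_0)-\tilde J(x_0)\big)/\tilde J(x_0)$. *)

(* Defs.v *)
From HB Require Import structures.
From mathcomp Require Import all_boot all_order all_algebra.
From mathcomp Require Import all_classical all_reals all_analysis.
From mathcomp Require Import complex.
Set Implicit Arguments. Unset Strict Implicit. Unset Printing Implicit Defensive.
Import Order.TTheory GRing.Theory Num.Theory.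
Import numFieldNormedType.Exports.
Local Open Scope classical_set_scope.
Local Open Scope ring_scope.

Section Defs.
Variable R : realType.

Definition posdef (n : nat) (M : 'M[R]_n) : Prop :=
  M^T = M /\ forall v : 'cV[R]_n, v != 0 -> 0 < (v^T *m M *m v) 0 0.

Definition hurwitz (n : nat) (M : 'M[R]_n) : Prop :=
  forall l : R[i], eigenvalue (map_mx (real_complex R) M) l -> complex.Re l < 0.

Definition stabilizable (n m : nat) (A : 'M[R]_n) (B : 'M[R]_(n, m)) : Prop :=
  exists F : 'M[R]_(m, n), hurwitz (A + B *m F).

Definition quadf (n : nat) (P : 'M[R]_n) (v : 'cV[R]_n) : R := (v^T *m P *m v) 0 0.

(* x : R -> R^n is the closed-loop trajectory of  xdot = A x + B u,  x(0) = x0,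
   under the sample-and-hold law u(t) = F_k x(t_k) on [t_k, t_{k+1}):
   x is continuous on [0,+oo) and satisfies the ODE on every (t_k, t_{k+1}). *)
Definition sampled_trajectory (n m : nat) (A : 'M[R]_n) (B : 'M[R]_(n, m))
    (tk : nat -> R) (F : nat -> 'M[R]_(m, n)) (x0 : 'cV[R]_n)
    (x : R -> 'cV[R]_n) : Prop :=
  x 0 = x0 /\
  (forall i : 'I_n, {within `[0, +oo[, continuous (fun t => x t i 0)}) /\
  (forall (k : nat) (t : R), tk k < t < tk k.+1 -> forall i : 'I_n,
     is_derive t 1 (fun s => x s i 0) ((A *m x t + B *m (F k *m x (tk k))) i 0)).

Definition stage_cost (n m : nat) (Q : 'M[R]_n) (Rw : 'M[R]_m)
    (tk : nat -> R) (F : nat -> 'M[R]_(m, n)) (x : R -> 'cV[R]_n)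
    (k : nat) (xi : R) : \bar R :=
  (\int[@lebesgue_measure R]_(t in `[tk k, (tk k + xi)%R]%classic)
     (((x t)^T *m Q *m x t
       + (F k *m x (tk k))^T *m Rw *m (F k *m x (tk k))) 0 0)%:E)%E.

(* total cost J(x0) = sum_k J_k(F_k, delta_k; x_k) (a series of nonnegative
   extended reals, possibly +oo) *)
Definition total_cost (n m : nat) (Q : 'M[R]_n) (Rw : 'M[R]_m)
    (tk : nat -> R) (F : nat -> 'M[R]_(m, n)) (x : R -> 'cV[R]_n) : \bar R :=
  (\sum_(0 <= k <oo) stage_cost Q Rw tk F x k (tk k.+1 - tk k))%E.

(* relative performance loss nu(x0) = (J(x0) - Jtilde(x0)) / Jtilde(x0),
   Jtilde(x0) = x0^T Ptilde x0 *)
Definition perf_loss (n m : nat) (Q : 'M[R]_n) (Rw : 'M[R]_m) (Pt : 'M[R]_n)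
    (tk : nat -> R) (F : nat -> 'M[R]_(m, n)) (x : R -> 'cV[R]_n)
    (x0 : 'cV[R]_n) : \bar R :=
  ((total_cost Q Rw tk F x - (quadf Pt x0)%:E) * ((quadf Pt x0)^-1)%:E)%E.

End Defs.

(* Main.v *)
Require Import Defs.
From HB Require Import structures.
From mathcomp Require Import all_boot all_order all_algebra.
From mathcomp Require Import all_classical all_reals all_analysis.
From mathcomp Require Import complex.
From mathcomp Require Import ring lra measurable_realfun.
Import Order.TTheory GRing.Theory Num.Theory.
Import numFieldNormedType.Exports.
Local Open Scope classical_set_scope.
Local Open Scope ring_scope.
Set Implicit Arguments. Unset Strict Implicit. Unset Printing Implicit Defensive.

Section Alg.
Variable R : realType.
Variable n : nat.
Implicit Types (P : 'M[R]_n) (v w : 'cV[R]_n).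
Definition bil P w v := (w^T *m P *m v) 0 0.

Lemma bil_linl P a b w1 w2 v :
  bil P (a *: w1 + b *: w2) v = a * bil P w1 v + b * bil P w2 v.
Proof.
by rewrite /bil linearD !linearZ /= mulmxDl -!scalemxAl mulmxDl -!scalemxAl !mxE.
Qed.

Lemma bil_sym P w v : P^T = P -> bil P w v = bil P v w.
Proof.
move=> sP; have -> : bil P v w = ((v^T *m P *m w)^T) 0 0 by rewrite mxE.
rewrite /bil.
by rewrite !trmx_mul trmxK sP mulmxA.
Qed.

Lemma posdef_ge0 P v : posdef P -> 0 <= bil P v v.
Proof.
move=> [_ pP]; have [->|v0] := eqVneq v 0.
  by rewrite /bil mulmx0 mxE.
exact/ltW/pP.
Qed.

Lemma bil_CS P w v : posdef P -> bil P w v ^+ 2 <= bil P w w * bil P v v.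
Proof.
move=> hP; have [sP pP] := hP.
have [->|v0] := eqVneq v 0.
  by rewrite /bil !mulmx0 mxE expr0n /= mulr0.
have c0 := pP v v0.
have := @posdef_ge0 P (bil P v v *: w + (- bil P w v) *: v) hP.
rewrite bil_linl ![bil P _ (_ + _)]bil_sym // !bil_linl.
rewrite [bil P v w]bil_sym // => h.
have : 0 <= bil P v v * (bil P v v * bil P w w - bil P w v ^+ 2).
  by move: h; rewrite expr2; nra.
by rewrite pmulr_rge0 // subr_ge0 mulrC.
Qed.

Lemma posdef_unit P : posdef P -> P \in unitmx.
Proof.
move=> [sP pP]; rewrite unitmxE unitfE; apply/negP => /det0P [u u0 uP].
have := pP u^T; rewrite trmxK trmx_eq0 => /(_ u0).
by rewrite uP mul0mx mxE ltxx.
Qed.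

Lemma quad_bound P (a : 'rV[R]_n) : posdef P ->
  exists c, 0 <= c /\ forall v, ((a *m v) 0 0) ^+ 2 <= c * bil P v v.
Proof.
move=> hP; have [sP _] := hP; set w := invmx P *m a^T.
exists (bil P w w); split; first exact: posdef_ge0.
move=> v; have -> : (a *m v) 0 0 = bil P w v.
  rewrite /bil /w trmx_mul trmxK trmx_inv sP.
  by rewrite -(mulmxA a) mulVmx ?mulmx1 //; exact: posdef_unit hP.
exact: bil_CS.
Qed.
End Alg.
Section Cont.
Variable R : realType.
Variable A : set R.
Definition cont (g : R -> R) := {within A, continuous g}.

Lemma cont_cst c : cont (fun _ => c).
Proof. by move=> x; apply: cst_continuous. Qed.

Lemma cont_add f g : cont f -> cont g -> cont (fun t => f t + g t).
Proof. by move=> hf hg x; apply: continuousD; [exact: hf|exact: hg]. Qed.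

Lemma cont_mul f g : cont f -> cont g -> cont (fun t => f t * g t).
Proof. by move=> hf hg x; apply: continuousM; [exact: hf|exact: hg]. Qed.

Lemma cont_opp f : cont f -> cont (fun t => - f t).
Proof. by move=> hf x; apply: continuousN; exact: hf. Qed.

Lemma cont_sum (I : Type) (s : seq I) (g : I -> R -> R) :
  (forall i, cont (g i)) -> cont (fun t => \sum_(i <- s) g i t).
Proof.
move=> hg; elim: s => [|i s ih].
  by under eq_fun do rewrite big_nil; exact: cont_cst.
by under eq_fun do rewrite big_cons; exact: cont_add.
Qed.

Definition mcont {p q} (M : R -> 'M[R]_(p, q)) := forall i j, cont (fun t => M t i j).

Lemma mcont_mul p q r (M : R -> 'M[R]_(p, q)) (N : R -> 'M[R]_(q, r)) :
  mcont M -> mcont N -> mcont (fun t => M t *m N t).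
Proof.
move=> hM hN i j; under eq_fun do rewrite mxE.
by apply: cont_sum => k; apply: cont_mul.
Qed.

Lemma mcont_add p q (M N : R -> 'M[R]_(p, q)) :
  mcont M -> mcont N -> mcont (fun t => M t + N t).
Proof. by move=> hM hN i j; under eq_fun do rewrite mxE; apply: cont_add. Qed.

Lemma mcont_tr p q (M : R -> 'M[R]_(p, q)) : mcont M -> mcont (fun t => (M t)^T).
Proof. by move=> hM i j; under eq_fun do rewrite mxE; apply: hM. Qed.

Lemma mcont_cst p q (M : 'M[R]_(p, q)) : mcont (fun _ => M).
Proof. by move=> i j; apply: cont_cst. Qed.
End Cont.

Section Ana.
Variable R : realType.
Notation mu := (@lebesgue_measure R).

Lemma cont_abs (A : set R) f : cont A f -> cont A (fun t => `|f t|).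
Proof. by move=> h x; apply: (continuous_comp (h x)); exact: norm_continuous. Qed.

Lemma cont_meas (a b : R) f : cont `[a, b] f ->
  measurable_fun `[a, b] (fun t => (f t)%:E).
Proof.
by move=> h; apply/measurable_EFinP; apply: subspace_continuous_measurable_fun.
Qed.

Lemma ftc_seg (a b : R) (y dy : R -> R) : a < b -> cont `[a, b] y ->
  cont `[a, b] dy -> (forall s, a < s < b -> is_derive s 1 y (dy s)) ->
  (\int[mu]_(s in `[a, b]) (2 * y s * dy s)%:E = (y b ^+ 2 - y a ^+ 2)%:E)%E.
Proof.
move=> ab cy cdy hd.
have der s : a < s < b -> is_derive s 1 (fun t => y t ^+ 2) (2 * y s * dy s).
  move=> /hd h; apply: is_derive_eq.
  by change (y s * dy s + y s * dy s = 2 * y s * dy s); ring.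
rewrite EFinB; apply: (@continuous_FTC2 R (fun s => 2 * y s * dy s) (fun t => y t ^+ 2) a b) => //.
- by apply: cont_mul; [apply: cont_mul => //; exact: cont_cst|].
- have cz : cont `[a, b] (fun t => y t ^+ 2).
    have -> : (fun t => y t ^+ 2) = (fun t => y t * y t) by apply/funext => t; rewrite expr2.
    exact: cont_mul.
  have [_ l r] := (continuous_within_itvP _ ab).1 cz.
  split => //.
  by move=> s; rewrite in_itv /= => /der h; exact: ex_derive.
- move=> s; rewrite in_itv /= => /der h.
  by rewrite derive1E derive_val.
Qed.

Lemma int_abs_bound (a b c K : R) (f g : R -> R) : a <= b -> b <= c ->
  cont `[a, c] f -> cont `[a, c] g -> 0 <= K -> (forall t, 0 <= g t) ->
  (forall t, `|f t| <= K * g t) ->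
  (`|\int[mu]_(t in `[a, b]) (f t)%:E| <= K%:E * \int[mu]_(t in `[a, c]) (g t)%:E)%E.
Proof.
move=> ab bc cf cg K0 g0 fg.
have sub : `[a, b] `<=` `[a, c].
  by apply: subset_itvl; rewrite bnd_simp.
have cf' := continuous_subspaceW sub cf.
have cg' := continuous_subspaceW sub cg.
apply: le_trans.
  by apply: le_abse_integral => //; exact: cont_meas cf'.
under eq_integral do rewrite abse_EFin.
apply: (@le_trans _ _ (\int[mu]_(t in `[a, b]) (K * g t)%:E)%E).
  apply: ge0_le_integral => //.
  - by apply: cont_meas; apply: cont_abs.
  - by apply: cont_meas; apply: cont_mul => //; exact: cont_cst.
  - by move=> t _; rewrite lee_fin.
under eq_integral do rewrite EFinM.
rewrite ge0_integralZl_EFin //; last exact: cont_meas.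
  apply: lee_wpmul2l; first by rewrite lee_fin.
  apply: ge0_subset_integral => //; first exact: cont_meas.
  by move=> t _; rewrite lee_fin.
by move=> t _; rewrite lee_fin.
Qed.


Lemma int_lower (a b mm : R) (g : R -> R) : a < b -> 0 <= mm ->
  cont `[a, b] g -> (forall t, a <= t <= b -> mm <= g t) ->
  ((mm * (b - a))%:E <= \int[mu]_(t in `[a, b]) (g t)%:E)%E.
Proof.
move=> ab m0 cg hg; rewrite EFinM.
have <- : (\int[mu]_(t in `[a, b]) (cst mm%:E) t = mm%:E * (b - a)%:E)%E.
  rewrite integral_cst //; congr (_ * _)%E.
  apply: (eq_trans (lebesgue_measure_itv `[a, b])).
  by rewrite /= lte_fin ab -EFinD.
apply: ge0_le_integral => //.
- exact: cont_meas.
Qed.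
End Ana.

Section Seq.
Variable R : realType.

Lemma tk_mono (tk : nat -> R) : (forall k, tk k < tk k.+1) ->
  forall k j, (k <= j)%N -> tk k <= tk j.
Proof.
move=> h k j /subnK <-; elim: (j - k)%N => [|d ih]; first by rewrite add0n.
by rewrite addSn; apply: le_trans ih (ltW (h _)).
Qed.

Lemma tk_big (tk : nat -> R) : tk k @[k --> \oo] --> +oo ->
  forall (A : R) k0, exists j, (k0 <= j)%N /\ A < tk j.
Proof.
move=> /cvgryPge h A k0; have [N _ hN] := h (A + 1).
exists (maxn N k0); split; first exact: leq_maxr.
by apply: lt_le_trans (hN _ _); [rewrite ltrDl|rewrite /= leq_maxl].
Qed.

Lemma tk_locate (tk : nat -> R) : tk 0%N = 0 -> (forall k, tk k < tk k.+1) ->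
  tk k @[k --> \oo] --> +oo ->
  forall N t, tk N <= t -> exists k, (N <= k)%N /\ tk k <= t <= tk k.+1.
Proof.
move=> t0 hinc hoo N t hNt.
have ex : exists j, t < tk j by have [j [_ hj]] := tk_big hoo t 0; exists j.
pose P := fun j => t < tk j.
have exP : exists j, P j by [].
case: (ex_minnP exP) => j Pj hmin.
have j0 : (0 < j)%N.
  rewrite lt0n; apply/negP => /eqP j0; move: Pj; rewrite /P j0 t0.
  have := le_trans (tk_mono hinc (leq0n N)) hNt; rewrite t0; lra.
exists j.-1; rewrite prednK //; split; last first.
  rewrite (ltW Pj) andbT; rewrite leNgt; apply/negP => h.
  by have := hmin _ h; case: (j) j0 => // j' _ /=; rewrite ltnn.
rewrite -ltnS prednK //; rewrite ltnNge; apply/negP => hjN.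
have := le_trans (tk_mono hinc hjN) hNt; move: Pj; rewrite /P; lra.
Qed.

Lemma W_cauchy (W : nat -> R) : (forall k, 0 <= W k) -> (forall k, W k.+1 <= W k) ->
  forall eta, 0 < eta -> exists N, forall j, (N <= j)%N -> W N - W j <= eta.
Proof.
move=> W0 Wd eta eta0.
have nd : nonincreasing_seq W by apply/nonincreasing_seqP.
have cW : cvgn W.
  apply/cvg_ex; eexists; apply: nonincreasing_cvgn => //.
  by exists 0 => r [k _ <-]; exact: W0.
have lb := nonincreasing_cvgn_ge nd cW.
move/cvgrPdist_lt : cW => /(_ eta eta0) [N _ hN].
exists N => j _; have := hN N (leqnn N); have := lb j.
rewrite /= => h1; rewrite ltr_norml => /andP[h2 h3]; lra.
Qed.

Lemma final_arg (tk W : nat -> R) (z : R -> R) (K c1 alpha : R) :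
  tk 0%N = 0 -> (forall k, tk k < tk k.+1) -> tk k @[k --> \oo] --> +oo ->
  (forall k, 0 <= W k) -> (forall k, W k.+1 <= W k) ->
  0 <= K -> 0 < alpha -> 0 <= c1 ->
  (forall k t, tk k <= t <= tk k.+1 ->
     `|z t - z (tk k)| <= K * (alpha * (W k - W k.+1))) ->
  (forall k mm, 0 <= mm -> (forall s, tk k <= s <= tk k.+1 -> mm <= z s) ->
     mm * (tk k.+1 - tk k) <= c1 * (alpha * (W k - W k.+1))) ->
  forall eps, 0 < eps -> exists M, forall t, M <= t -> z t < eps.
Proof.
move=> t0 hinc hoo W0 Wd K0 a0 c10 hz hlow eps e0.
have KA0 : 0 <= K * alpha by apply: mulr_ge0 => //; exact: ltW.
have Wmono k j : (k <= j)%N -> W j <= W k.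
  move/subnK <-; elim: (j - k)%N => [|d ih]; first by rewrite add0n.
  by rewrite addSn; apply: le_trans (Wd _) ih.
have zdiff k j : (k <= j)%N -> `|z (tk j) - z (tk k)| <= K * (alpha * (W k - W j)).
  move/subnK <-; elim: (j - k)%N => [|d ih].
    by rewrite add0n subrr normr0 subrr !mulr0.
  rewrite addSn; set j' := (d + k)%N in ih *.
  have h1 := hz j' (tk j'.+1); rewrite lexx ltW // in h1.
  have := ler_normD (z (tk j'.+1) - z (tk j')) (z (tk j') - z (tk k)).
  rewrite addrA subrK => h2; apply: le_trans h2 _.
  have := h1 isT; move: ih; rewrite !mulrA; lra.
set eta := eps / (4 * (K * alpha + 1)).
have eta0 : 0 < eta by apply: divr_gt0 => //; lra.
have heta : eta * (4 * (K * alpha + 1)) = eps by rewrite /eta mulfVK //; lra.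
have [N hN] := W_cauchy W0 Wd eta0.
exists (tk N) => t ht; rewrite ltNge; apply/negP => zt.
have [k [Nk /andP[tk1 tk2]]] := tk_locate t0 hinc hoo ht.
have big j : (k <= j)%N -> forall s, tk j <= s <= tk j.+1 -> eps / 2 <= z s.
  move=> kj s hs.
  have A1 := hz j s hs; have A2 := zdiff k j kj.
  have A3 := hz k t; rewrite tk1 tk2 in A3; have {}A3 := A3 isT.
  have w1 := Wmono N k Nk; have w2 := Wmono k.+1 j.+1 kj.
  have w3 := hN j.+1 (leq_trans Nk (leqW kj)).
  move: A1 A2 A3; rewrite !ler_norml !mulrA => /andP[a1 _] /andP[a2 _] /andP[_ a3].
  set KA := K * alpha in KA0 heta a1 a2 a3.
  have : KA * (2 * (W N - W j.+1)) <= KA * (2 * eta).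
    by apply: ler_wpM2l => //; lra.
  nra.
have sum j : (k <= j)%N -> eps / 2 * (tk j - tk k) <= c1 * (alpha * (W k - W j)).
  move/subnK <-; elim: (j - k)%N => [|d ih].
    by rewrite add0n !subrr !mulr0.
  rewrite addSn; set j' := (d + k)%N in ih *.
  have := hlow j' (eps / 2); rewrite divr_ge0 ?(ltW e0) // => /(_ isT).
  have := big j' (leq_addl _ _) => hb /(_ hb) h.
  move: ih h; rewrite !mulrBr; lra.
set Bd := c1 * (alpha * W k).
have [j [kj hj]] := tk_big hoo (tk k + 2 * Bd / eps) k.
have := sum j kj; have := W0 j.
have : eps / 2 * (2 * Bd / eps) = Bd by field; lra.
have : eps / 2 * (2 * Bd / eps) < eps / 2 * (tk j - tk k).
  by rewrite ltr_pM2l ?divr_gt0 //; lra.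
have : 0 <= c1 * alpha by apply: mulr_ge0 => //; exact: ltW.
rewrite /Bd; nra.
Qed.
End Seq.

Unset Implicit Arguments.

Theorem theorem1 (R : realType) (n m : nat)
  (A : 'M[R]_n) (B : 'M[R]_(n, m)) (Q : 'M[R]_n) (Rw : 'M[R]_m)
  (Ft : 'M[R]_(m, n)) (Pt : 'M[R]_n) (alpha : R)
  (tk : nat -> R) (F : nat -> 'M[R]_(m, n)) (x0 : 'cV[R]_n) (x : R -> 'cV[R]_n) :
  stabilizable A B ->
  posdef Q -> posdef Rw ->
  hurwitz (A + B *m Ft) ->
  posdef Pt ->
  (A + B *m Ft)^T *m Pt + Pt *m (A + B *m Ft) + Q + Ft^T *m Rw *m Ft = 0 ->
  1 < alpha ->
  tk 0%N = 0 ->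
  (forall k, tk k < tk k.+1) ->
  tk k @[k --> \oo] --> +oo ->
  sampled_trajectory A B tk F x0 x ->
  (forall (k : nat) (xi : R), 0 <= xi <= tk k.+1 - tk k ->
     (stage_cost Q Rw tk F x k xi
       <= (alpha * (quadf Pt (x (tk k)) - quadf Pt (x (tk k + xi))))%:E)%E) ->
  (forall i : 'I_n, x t i 0 @[t --> +oo] --> 0) /\
  (x0 != 0 -> (perf_loss Q Rw Pt tk F x x0 <= (alpha - 1)%:E)%E).
Proof.
move=> _ hQ hRw _ hP _ ha1 ht0 htinc htoo [hx0 [hxc hxd]] hJ.
set W := fun k => quadf Pt (x (tk k)).
set ell : nat -> R -> R := fun k t => ((x t)^T *m Q *m x t
       + (F k *m x (tk k))^T *m Rw *m (F k *m x (tk k))) 0 0.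
set sc := fun k xi => stage_cost Q Rw tk F x k xi.
have ell0 k t : 0 <= ell k t.
  rewrite /ell mxE; apply: addr_ge0; [exact: (posdef_ge0 _ hQ)|exact: (posdef_ge0 _ hRw)].
have sc0 k xi : (0 <= sc k xi)%E.
  by rewrite /sc /stage_cost; apply: integral_ge0 => t _; rewrite lee_fin; exact: ell0.
have tkS k : tk k + (tk k.+1 - tk k) = tk k.+1 by rewrite addrC subrK.
have hd k : (sc k (tk k.+1 - tk k)%R <= ((alpha * (W k - W k.+1))%R)%:E)%E.
  by have := hJ k (tk k.+1 - tk k); rewrite tkS lexx subr_ge0 ltW //; apply.
have W0 k : 0 <= W k by exact: (posdef_ge0 _ hP).
have Wdec k : W k.+1 <= W k.
  have := le_trans (sc0 _ _) (hd k); rewrite lee_fin pmulr_rge0 ?subr_ge0//.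
  lra.
have part N : (\sum_(0 <= k < N) sc k (tk k.+1 - tk k)%R
    <= ((alpha * (W 0%N - W N))%R)%:E)%E.
  elim: N => [|N ih]; first by rewrite big_geq // subrr mulr0.
  rewrite big_nat_recr //=; apply: le_trans (leeD ih (hd N)) _.
  by rewrite -EFinD lee_fin; lra.
have tot : (total_cost Q Rw tk F x <= ((alpha * W 0%N)%R)%:E)%E.
  rewrite /total_cost; apply: lime_le.
    by apply: is_cvg_nneseries => k _ _; exact: sc0.
  apply: nearW => N; apply: le_trans (part N) _.
  by rewrite lee_fin ler_pM2l ?(lt_trans ltr01 ha1) // lerBlDr lerDl.
have tot0 : (0 <= total_cost Q Rw tk F x)%E.
  by apply: nneseries_ge0 => k _ _; exact: sc0.
split; last first.
  move=> x00; have Wpos : 0 < W 0%N by rewrite /W ht0 hx0; exact: hP.2.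
  rewrite /perf_loss; move: tot tot0; rewrite /W ht0 hx0 in Wpos *.
  case: (total_cost Q Rw tk F x) => [c| |] //= hc hc0.
  rewrite -EFinB -EFinM lee_fin; rewrite lee_fin in hc.
  rewrite ler_pdivrMr //; lra.
move=> i; set y := fun t => x t i 0.
have [c1 [c10 hc1]] := quad_bound (row i 1%:M) hQ.
have [c2 [c20 hc2]] := quad_bound (row i A) hQ.
have [c3 [c30 hc3]] := quad_bound (row i B) hRw.
have yv (v : 'cV[R]_n) : v i 0 = (row i 1%:M *m v) 0 0 by rewrite -row_mul mul1mx mxE.
have rv p (M : 'M[R]_(n, p)) (v : 'cV[R]_p) : (M *m v) i 0 = (row i M *m v) 0 0.
  by rewrite -row_mul [RHS]mxE.
set K := 2 * c1 + c2 + c3.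
have K0 : 0 <= K by rewrite /K; lra.
set dy := fun k s => (A *m x s + B *m (F k *m x (tk k))) i 0.
have fbound k t : `|2 * y t * dy k t| <= K * ell k t.
  have -> : ell k t = bil Q (x t) (x t) + bil Rw (F k *m x (tk k)) (F k *m x (tk k)).
    by rewrite /ell mxE.
  rewrite /dy mxE !rv /y yv.
  have := hc1 (x t); have := hc2 (x t); have := hc3 (F k *m x (tk k)).
  have := posdef_ge0 (x t) hQ; have := posdef_ge0 (F k *m x (tk k)) hRw.
  set yy := (row i 1%:M *m x t) 0 0; set p := (row i A *m x t) 0 0.
  set q := (row i B *m (F k *m x (tk k))) 0 0.
  set bQ := bil Q (x t) (x t); set bR := bil Rw _ _.
  move=> bR0 bQ0 h3 h2 h1.
  have : 0 <= c3 * bQ by apply: mulr_ge0.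
  have : 0 <= (2 * c1 + c2) * bR by apply: mulr_ge0 => //; lra.
  rewrite /K ler_norml => e1 e2; clearbody yy p q bQ bR.
  have s1 : 0 <= (yy - p) ^+ 2 by apply: sqr_ge0.
  have s2 : 0 <= (yy - q) ^+ 2 by apply: sqr_ge0.
  have s3 : 0 <= (yy + p) ^+ 2 by apply: sqr_ge0.
  have s4 : 0 <= (yy + q) ^+ 2 by apply: sqr_ge0.
  move: s1 s2 s3 s4 h1 h2 h3; rewrite !expr2 => s1 s2 s3 s4 h1 h2 h3.
  apply/andP; split; nra.
have cx (a b : R) : 0 <= a -> mcont `[a, b] x.
  move=> a0 i' j; rewrite (ord1 j); apply: continuous_subspaceW (hxc i').
  move=> s /=; rewrite !in_itv /= andbT => /andP[h _]; exact: le_trans a0 h.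
have tk0 k : 0 <= tk k by rewrite -ht0; apply: tk_mono.
have cell k b : cont `[tk k, b] (ell k).
  have hx := cx (tk k) b (tk0 k).
  have : mcont `[tk k, b] (fun t => (x t)^T *m Q *m x t
       + (F k *m x (tk k))^T *m Rw *m (F k *m x (tk k))).
    apply: mcont_add; last exact: mcont_cst.
    apply: mcont_mul => //; apply: mcont_mul; last exact: mcont_cst.
    exact: mcont_tr.
  by move=> /(_ 0 0).
have cdy k b : cont `[tk k, b] (dy k).
  have hx := cx (tk k) b (tk0 k).
  have : mcont `[tk k, b] (fun s => A *m x s + B *m (F k *m x (tk k))).
    apply: mcont_add; last exact: mcont_cst.
    by apply: mcont_mul => //; exact: mcont_cst.
  by move=> /(_ i 0).
have cy k b : cont `[tk k, b] y by move: (cx (tk k) b (tk0 k)) => /(_ i 0).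
have hd' k : (\int[@lebesgue_measure R]_(t in `[tk k, tk k.+1]) (ell k t)%:E
    <= (alpha * (W k - W k.+1))%:E)%E.
  by have := hd k; rewrite /sc /stage_cost tkS.
have cf k b : cont `[tk k, b] (fun s => 2 * y s * dy k s).
  by apply: cont_mul; [apply: cont_mul; [exact: cont_cst|exact: cy]|exact: cdy].
have zbound k t : tk k <= t <= tk k.+1 ->
    `|y t ^+ 2 - y (tk k) ^+ 2| <= K * (alpha * (W k - W k.+1)).
  move=> /andP[h1 h2]; have [->|ne] := eqVneq t (tk k).
    rewrite subrr normr0; apply: mulr_ge0 => //; apply: mulr_ge0; first lra.
    by rewrite subr_ge0; exact: Wdec.
  have lt : tk k < t by rewrite lt_neqAle eq_sym ne h1.
  have hsub s : tk k < s < t -> tk k < s < tk k.+1.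
    by move=> /andP[a b]; rewrite a /=; exact: lt_le_trans b h2.
  have e := @ftc_seg R (tk k) t y (dy k) lt (cy k t) (cdy k t)
    (fun s hs => hxd k s (hsub s hs) i).
  have := @int_abs_bound R (tk k) t (tk k.+1) K (fun s => 2 * y s * dy k s) (ell k)
    (ltW lt) h2 (cf k _) (cell k _) K0 (ell0 k) (fbound k).
  rewrite e /= => hb.
  have K0E : (0 <= K%:E)%E by rewrite lee_fin.
  have := le_trans hb (lee_wpmul2l K0E (hd' k)).
  by rewrite -EFinM lee_fin.
have hlow k mm : 0 <= mm -> (forall s, tk k <= s <= tk k.+1 -> mm <= y s ^+ 2) ->
    mm * (tk k.+1 - tk k) <= c1 * (alpha * (W k - W k.+1)).
  move=> m0 hm.
  have hl := @int_lower R (tk k) (tk k.+1) mm (fun s => c1 * ell k s) (htinc k) m0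
    (cont_mul (@cont_cst R _ c1) (cell k _)).
  have : (mm%:E * (tk k.+1 - tk k)%:E
      <= c1%:E * \int[@lebesgue_measure R]_(t in `[tk k, tk k.+1]) (ell k t)%:E)%E.
    rewrite -EFinM; apply: le_trans (hl _) _.
      move=> s hs; have h1 := hm s hs.
      suff h2 : y s ^+ 2 <= c1 * ell k s by exact: le_trans h1 h2.
      have -> : ell k s = bil Q (x s) (x s) + bil Rw (F k *m x (tk k)) (F k *m x (tk k)).
        by rewrite /ell mxE.
      rewrite /y yv; apply: le_trans (hc1 (x s)) _; rewrite ler_wpM2l // lerDl.
      exact: posdef_ge0.
    under eq_integral do rewrite EFinM.
    rewrite ge0_integralZl_EFin //; last exact: cont_meas.
    by move=> t _; rewrite lee_fin.
  have c1E : (0 <= c1%:E)%E by rewrite lee_fin.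
  move/le_trans => /(_ _ (lee_wpmul2l c1E (hd' k))).
  by rewrite -!EFinM lee_fin.
have a0 : 0 < alpha by lra.
have fa := @final_arg R tk W (fun t => y t ^+ 2) K c1 alpha ht0 htinc htoo W0 Wdec
  K0 a0 c10 zbound hlow.
apply/cvgr0Pnorm_lt => e e0.
have [M hM] := fa (e ^+ 2) (exprn_gt0 2 e0).
near=> t.
have Mt : M <= t by near: t; apply: nbhs_pinfty_ge; exact: num_real.
have := hM t Mt; rewrite ltNge; apply: contraNT; rewrite -leNgt => ht.
rewrite -(real_normK (num_real (y t))); have n0 := normr_ge0 (y t).
by rewrite !expr2; nra.
Unshelve. all: by end_near.
Qed.
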